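(* Let $G\in\mathrm{PLT}$ and let $A,B$ be finitely generated subgroups of $G'$. Then there exists $g\in G$ such that $A^g$ and $B$ centralize each other (every element of $A^g$ commutes with every element of $B$).
   Context: $\mathrm{PLT}$ is the class of groups that act faithfully by piecewise linear orientation preserving self-homeomorphisms of $[0,1]$ (each differentiable except at finitely many points) with no common fixed point in $(0,1)$. $G'$ is the commutator subgroup, and $A^g=gAg^{-1}$. *)

(* Defs.v *)
From Stdlib Require Import Reals List.
Open Scope R_scope.

(* Homeomorphisms of [0,1] are represented as functions R -> R that are the
   identity outside [0,1]; group law = composition. *)

Definition PL_homeo (f : R -> R) : Prop :=
  (forall t, (t < 0 \/ 1 < t) -> f t = t) /\
  f 0 = 0 /\ f 1 = 1 /\
  (forall s t, 0 <= s -> s < t -> t <= 1 -> f s < f t) /\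
  exists (n : nat) (x : nat -> R),
    x 0%nat = 0 /\ x n = 1 /\
    (forall i, (i < n)%nat -> x i < x (S i)) /\
    (forall i, (i < n)%nat -> exists a b : R,
        forall t, x i <= t -> t <= x (S i) -> f t = a * t + b).

Definition idR : R -> R := fun x => x.

Definition is_inv (f g : R -> R) : Prop :=
  (forall x, f (g x) = x) /\ (forall x, g (f x) = x).

Definition PL_group (G : (R -> R) -> Prop) : Prop :=
  (forall f, G f -> PL_homeo f) /\
  G idR /\
  (forall f g, G f -> G g -> G (fun x => f (g x))) /\
  (forall f, G f -> exists g, G g /\ is_inv f g).

Definition PLT (G : (R -> R) -> Prop) : Prop :=
  PL_group G /\
  forall t, 0 < t < 1 -> exists g, G g /\ g t <> t.

Definition commR (g h gi hi : R -> R) : R -> R :=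
  fun x => g (h (gi (hi x))).

(* The commutator subgroup G' : products of commutators of elements of G
   (the inverse of a commutator is a commutator). *)
Inductive derived (G : (R -> R) -> Prop) : (R -> R) -> Prop :=
| derived_id : derived G idR
| derived_step : forall f g h gi hi,
    derived G f -> G g -> G h -> is_inv g gi -> is_inv h hi ->
    derived G (fun x => commR g h gi hi (f x)).

Inductive gen (s : list (R -> R)) : (R -> R) -> Prop :=
| gen_id : gen s idR
| gen_mul : forall f y, gen s f -> In y s -> gen s (fun x => y (f x))
| gen_inv : forall f y yi, gen s f -> In y s -> is_inv y yi ->
    gen s (fun x => yi (f x)).

(* Main.v *)
Require Import Defs.
From Stdlib Require Import Reals List Lra Lia Classical.
Open Scope R_scope.

Definition germ (p a : R) (f : R -> R) := exists e, 0 < e /\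
  forall t, 0 <= t <= 1 -> p - e <= t <= p + e -> f t = p + a * (t - p).

Definition maps01 (f : R -> R) := forall t, 0 <= t <= 1 -> 0 <= f t <= 1.

Lemma PL_mono f : PL_homeo f -> forall s t, 0 <= s -> s < t -> t <= 1 -> f s < f t.
Proof. intros [_ [_ [_ [H _]]]]; exact H. Qed.

Lemma PL_maps f : PL_homeo f -> maps01 f.
Proof.
  intros HP t Ht. pose proof (PL_mono f HP) as M.
  destruct HP as [_ [H0 [H1 _]]].
  destruct (Req_dec t 0) as [->|Ht0]. { rewrite H0; lra. }
  split.
  - rewrite <- H0. left. apply M; lra.
  - destruct (Req_dec t 1) as [->|Ht1]. { lra. }
    rewrite <- H1. left. apply M; lra.
Qed.

Lemma PL_germ0 f : PL_homeo f -> exists a, germ 0 a f.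
Proof.
  intros [_ [H0 [H1 [_ [n [x [Hx0 [Hxn [Hinc Hlin]]]]]]]]].
  destruct n as [|n]. { rewrite Hx0 in Hxn. lra. }
  destruct (Hlin 0%nat ltac:(lia)) as [a [b Hab]].
  pose proof (Hinc 0%nat ltac:(lia)) as Hi.
  exists a, (x 1%nat). split; [lra|].
  intros t Ht Hte.
  assert (Hb : f 0 = a * 0 + b) by (apply Hab; lra).
  rewrite Hab by lra. lra.
Qed.

Lemma PL_germ1 f : PL_homeo f -> exists a, germ 1 a f.
Proof.
  intros [_ [H0 [H1 [_ [n [x [Hx0 [Hxn [Hinc Hlin]]]]]]]]].
  destruct n as [|n]. { rewrite Hx0 in Hxn. lra. }
  destruct (Hlin n ltac:(lia)) as [a [b Hab]].
  pose proof (Hinc n ltac:(lia)) as Hi.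
  exists a, (1 - x n). split; [lra|].
  intros t Ht Hte.
  assert (Hb : f 1 = a * 1 + b) by (apply Hab; lra).
  rewrite Hab by lra. assert (b = 1 - a) by lra. subst b. ring.
Qed.

Lemma germ_comp p a b f g : maps01 f -> germ p a f -> germ p b g ->
  germ p (b * a) (fun x => g (f x)).
Proof.
  intros Hm [e1 [He1 H1]] [e2 [He2 H2]].
  assert (Hpos : 0 < Rabs a + 1) by (pose proof (Rabs_pos a); lra).
  set (m := e2 / (Rabs a + 1)).
  assert (Hm0 : 0 < m) by (apply Rdiv_lt_0_compat; lra).
  assert (Hme : (Rabs a + 1) * m = e2) by (unfold m; field; lra).
  exists (Rmin e1 m). split; [apply Rmin_pos; lra|].
  intros t Ht Hte.
  pose proof (Rmin_l e1 m). pose proof (Rmin_r e1 m).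
  pose proof (Hm t Ht) as Hft.
  rewrite H1 in Hft |- * by lra.
  rewrite H2; [ring| exact Hft |].
  set (u := t - p). assert (-m <= u <= m) by (unfold u; lra).
  destruct (Rcase_abs a) as [Ha|Ha].
  - rewrite Rabs_left in Hme by lra.
    assert (0 <= (- a) * (u + m)) by (apply Rmult_le_pos; lra).
    assert (0 <= (- a) * (m - u)) by (apply Rmult_le_pos; lra).
    split; nra.
  - rewrite Rabs_right in Hme by lra.
    assert (0 <= a * (u + m)) by (apply Rmult_le_pos; lra).
    assert (0 <= a * (m - u)) by (apply Rmult_le_pos; lra).
    split; nra.
Qed.

Lemma germ_ext p a f g : germ p a f -> (forall x, f x = g x) -> germ p a g.
Proof. intros [e [He H]] E. exists e. split; auto. intros. rewrite <- E. auto. Qed.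

Lemma germ_slope p a b f : germ p a f -> a = b -> germ p b f.
Proof. intros H ->. exact H. Qed.

Lemma germ_id_slope p a f : (p = 0 \/ p = 1) -> germ p a f -> (forall x, f x = x) -> a = 1.
Proof.
  intros Hp [e [He H]] Hid.
  pose proof (Rmin_l e (1/2)). pose proof (Rmin_r e (1/2)).
  assert (0 < Rmin e (1/2)) by (apply Rmin_pos; lra).
  set (d := Rmin e (1/2)) in *.
  destruct Hp as [->| ->].
  - specialize (H d ltac:(lra) ltac:(lra)). rewrite Hid in H.
    assert ((a - 1) * d = 0) by nra.
    apply Rmult_integral in H3. lra.
  - specialize (H (1 - d) ltac:(lra) ltac:(lra)). rewrite Hid in H.
    assert ((a - 1) * d = 0) by nra.
    apply Rmult_integral in H3. lra.
Qed.
Definition outfix (f : R -> R) := forall t, t < 0 \/ 1 < t -> f t = t.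
Definition nice f := outfix f /\ maps01 f /\ (exists a, germ 0 a f) /\ (exists a, germ 1 a f).

Lemma PL_nice f : PL_homeo f -> nice f.
Proof.
  intros H. split; [exact (proj1 H)|]. split; [apply PL_maps; auto|].
  split; [apply PL_germ0 | apply PL_germ1]; auto.
Qed.

Lemma nice_ext f g : nice f -> (forall x, f x = g x) -> nice g.
Proof.
  intros [H1 [H2 [[a Ha] [b Hb]]]] E. split; [|split; [|split]].
  - intros t Ht. rewrite <- E. auto.
  - intros t Ht. rewrite <- E. auto.
  - exists a. eapply germ_ext; eauto.
  - exists b. eapply germ_ext; eauto.
Qed.

Lemma inv_in G g gi : PL_group G -> G g -> is_inv g gi ->
  exists g', G g' /\ forall x, gi x = g' x.
Proof.
  intros [_ [_ [_ Hinv]]] Hg [E1 E2].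
  destruct (Hinv g Hg) as [g' [Hg' [F1 F2]]].
  exists g'. split; auto. intros x. rewrite <- (F2 (gi x)). rewrite E1. reflexivity.
Qed.

Lemma inv_nice G g gi : PL_group G -> G g -> is_inv g gi -> nice gi.
Proof.
  intros HG Hg Hi. destruct (inv_in G g gi HG Hg Hi) as [g' [Hg' E]].
  apply nice_ext with g'. apply PL_nice. apply HG. auto. intros; auto.
Qed.

Lemma maps01_comp f g : maps01 f -> maps01 g -> maps01 (fun x => g (f x)).
Proof. intros Hf Hg t Ht. apply Hg, Hf, Ht. Qed.

Lemma step_germ p g gi h hi f ag agi ah ahi : (p = 0 \/ p = 1) ->
  germ p ag g -> germ p agi gi -> germ p ah h -> germ p ahi hi -> germ p 1 f ->
  maps01 gi -> maps01 hi -> maps01 h -> maps01 f ->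
  (forall x, g (gi x) = x) -> (forall x, h (hi x) = x) ->
  germ p 1 (fun x => g (h (gi (hi (f x))))).
Proof.
  intros Hp Hg Hgi Hh Hhi Hf Mgi Mhi Mh Mf E1 E2.
  assert (S1 : ag * agi = 1).
  { apply (germ_id_slope p _ (fun x => g (gi x))); auto. apply germ_comp; auto. }
  assert (S2 : ah * ahi = 1).
  { apply (germ_id_slope p _ (fun x => h (hi x))); auto. apply germ_comp; auto. }
  apply germ_slope with (ag * (ah * (agi * (ahi * 1)))).
  - assert (M1 : maps01 (fun x => hi (f x))) by (apply maps01_comp; auto).
    assert (M2 : maps01 (fun x => gi (hi (f x)))) by (apply (maps01_comp (fun x => hi (f x))); auto).
    assert (M3 : maps01 (fun x => h (gi (hi (f x))))) by (apply (maps01_comp (fun x => gi (hi (f x)))); auto).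
    apply (germ_comp p _ _ (fun x => h (gi (hi (f x)))) g); [exact M3 | | exact Hg].
    apply (germ_comp p _ _ (fun x => gi (hi (f x))) h); [exact M2 | | exact Hh].
    apply (germ_comp p _ _ (fun x => hi (f x)) gi); [exact M1 | | exact Hgi].
    apply (germ_comp p _ _ f hi); auto.
  - transitivity ((ag * agi) * (ah * ahi)); [ring|]. rewrite S1, S2. ring.
Qed.

Lemma derived_props G d : PL_group G -> derived G d ->
  nice d /\ germ 0 1 d /\ germ 1 1 d.
Proof.
  intros HG Hd. induction Hd as [| f g h gi hi Hd IH Hg Hh Hgi Hhi].
  - assert (Hn : nice idR).
    { split; [|split; [|split]].
      - intros t _. reflexivity.
      - intros t Ht. exact Ht.
      - exists 1, 1. split; [lra|]. intros. unfold idR. ring.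
      - exists 1, 1. split; [lra|]. intros. unfold idR. ring. }
    split; auto. split; exists 1; split; [lra| intros; unfold idR; ring | lra | intros; unfold idR; ring].
  - destruct IH as [Nf [Gf0 Gf1]].
    pose proof (PL_nice g (proj1 HG g Hg)) as Ng.
    pose proof (PL_nice h (proj1 HG h Hh)) as Nh.
    pose proof (inv_nice G g gi HG Hg Hgi) as Ngi.
    pose proof (inv_nice G h hi HG Hh Hhi) as Nhi.
    destruct Ng as [Og [Mg [[ag0 Hg0] [ag1 Hg1]]]].
    destruct Nh as [Oh [Mh [[ah0 Hh0] [ah1 Hh1]]]].
    destruct Ngi as [Ogi [Mgi [[agi0 Hgi0] [agi1 Hgi1]]]].
    destruct Nhi as [Ohi [Mhi [[ahi0 Hhi0] [ahi1 Hhi1]]]].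
    destruct Nf as [Of [Mf _]].
    unfold commR. split; [|split].
    + split; [|split; [|split]].
      * intros t Ht. rewrite Of, Ohi, Ogi, Oh, Og; auto.
      * apply (maps01_comp (fun x => h (gi (hi (f x))))); auto.
        apply (maps01_comp (fun x => gi (hi (f x)))); auto.
        apply (maps01_comp (fun x => hi (f x))); auto.
        apply maps01_comp; auto.
      * exists 1. apply (step_germ 0 g gi h hi f ag0 agi0 ah0 ahi0); auto; try apply Hgi; apply Hhi.
      * exists 1. apply (step_germ 1 g gi h hi f ag1 agi1 ah1 ahi1); auto; try apply Hgi; apply Hhi.
    + apply (step_germ 0 g gi h hi f ag0 agi0 ah0 ahi0); auto; try apply Hgi; apply Hhi.
    + apply (step_germ 1 g gi h hi f ag1 agi1 ah1 ahi1); auto; try apply Hgi; apply Hhi.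
Qed.
Definition fixout (f : R -> R) e := forall t, t <= e \/ 1 - e <= t -> f t = t.

Lemma fixout_mono f e e' : fixout f e -> e' <= e -> fixout f e'.
Proof. intros H He t Ht. apply H. lra. Qed.

Lemma derived_fix G d : PL_group G -> derived G d -> exists e, 0 < e <= 1/2 /\ fixout d e.
Proof.
  intros HG Hd. destruct (derived_props G d HG Hd) as [[Od _] [[e0 [He0 G0]] [e1 [He1 G1]]]].
  pose proof (Rmin_l (Rmin e0 e1) (1/2)). pose proof (Rmin_r (Rmin e0 e1) (1/2)).
  pose proof (Rmin_l e0 e1). pose proof (Rmin_r e0 e1).
  assert (0 < Rmin (Rmin e0 e1) (1/2)) by (repeat apply Rmin_pos; lra).
  set (e := Rmin (Rmin e0 e1) (1/2)) in *.
  exists e. split; [lra|]. intros t Ht.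
  destruct (Rlt_le_dec t 0). { apply Od; lra. }
  destruct (Rlt_le_dec 1 t). { apply Od; lra. }
  destruct Ht.
  - rewrite G0 by lra. ring.
  - rewrite G1 by lra. ring.
Qed.

Lemma fix_list s : (forall a, In a s -> exists e, 0 < e <= 1/2 /\ fixout a e) ->
  exists e, 0 < e <= 1/2 /\ forall a, In a s -> fixout a e.
Proof.
  induction s as [|y s IH]; intros H.
  - exists (1/2). split; [lra|]. intros a [].
  - destruct IH as [e [He He']]. { intros a Ha. apply H. right. auto. }
    destruct (H y (or_introl eq_refl)) as [e2 [He2 Hy]].
    pose proof (Rmin_l e e2). pose proof (Rmin_r e e2).
    assert (0 < Rmin e e2) by (apply Rmin_pos; lra).
    exists (Rmin e e2). split; [lra|]. intros a [<-|Ha].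
    + apply fixout_mono with e2; auto.
    + apply fixout_mono with e; auto.
Qed.

Definition inj (f : R -> R) := forall u v, f u = f v -> u = v.

Lemma derived_inj G d : derived G d -> inj d.
Proof.
  intros Hd. induction Hd as [| f g h gi hi Hd IH Hg Hh [Eg1 Eg2] [Eh1 Eh2]].
  - intros u v E; exact E.
  - intros u v E. unfold commR in E. apply IH.
    apply (f_equal gi) in E. rewrite !Eg2 in E.
    apply (f_equal hi) in E. rewrite !Eh2 in E.
    apply (f_equal g) in E. rewrite !Eg1 in E.
    apply (f_equal h) in E. rewrite !Eh1 in E. exact E.
Qed.

Lemma gen_fix s e f : (forall y, In y s -> fixout y e /\ inj y) -> gen s f ->
  fixout f e /\ inj f.
Proof.
  intros Hs Hf. induction Hf as [|f y Hf IH Hy|f y yi Hf IH Hy [Hyi1 Hyi2]].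
  - split. intros t _; reflexivity. intros u v E; exact E.
  - destruct IH as [F Fi]. destruct (Hs y Hy) as [Fy Iy]. split.
    + intros t Ht. rewrite F by auto. apply Fy; auto.
    + intros u v E. apply Fi, Iy, E.
  - destruct IH as [F Fi]. destruct (Hs y Hy) as [Fy Iy]. split.
    + intros t Ht. rewrite F by auto. rewrite <- (Fy t Ht) at 1. apply Hyi2.
    + intros u v E. apply Fi. apply (f_equal y) in E. rewrite !Hyi1 in E. exact E.
Qed.

Lemma preserve f e y : fixout f e -> inj f -> e < y < 1 - e -> e < f y < 1 - e.
Proof.
  intros F I Hy.
  destruct (Rle_lt_dec (f y) e) as [H1|H1].
  { assert (f (f y) = f y) by (apply F; auto). apply I in H. lra. }
  destruct (Rle_lt_dec (1 - e) (f y)) as [H2|H2].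
  { assert (f (f y) = f y) by (apply F; auto). apply I in H. lra. }
  lra.
Qed.

Lemma orbit G t d : PLT G -> 0 < t < 1 -> 0 < d -> exists g, G g /\ g t < d.
Proof.
  intros [HG Hfix] Ht Hd.
  destruct HG as [HPL [Hid [Hcomp Hinv]]].
  apply NNPP; intro Hno.
  assert (Hlow : forall g, G g -> d <= g t).
  { intros g Hg. destruct (Rlt_le_dec (g t) d); auto. exfalso; apply Hno; eauto. }
  set (E := fun y => exists g, G g /\ y = - g t).
  destruct (completeness E) as [m [Hub Hleast]].
  - exists (-d). intros y [g [Hg ->]]. specialize (Hlow g Hg). lra.
  - exists (- idR t). exists idR. split; auto.
  - set (s := -m).
    assert (Hsle : forall g, G g -> s <= g t).
    { intros g Hg. assert (E (- g t)) by (exists g; auto). apply Hub in H. unfold s; lra. }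
    assert (Hds : d <= s).
    { assert (is_upper_bound E (-d)).
      { intros y [g [Hg ->]]. specialize (Hlow g Hg). lra. }
      apply Hleast in H. unfold s; lra. }
    assert (Hst : s <= t) by (apply (Hsle idR Hid)).
    assert (Hinf : forall w, s < w -> exists g, G g /\ g t < w).
    { intros w Hw. apply NNPP; intro N.
      assert (is_upper_bound E (-w)).
      { intros y [g [Hg ->]]. destruct (Rlt_le_dec (g t) w).
        - exfalso; apply N; eauto.
        - lra. }
      apply Hleast in H. unfold s in Hw; lra. }
    assert (Key : forall h hi, G h -> G hi -> is_inv h hi -> s <= hi s).
    { intros h hi Hh Hhi [E1 E2].
      destruct (Rlt_le_dec (hi s) s) as [Hlt|]; auto. exfalso.
      pose proof (PL_mono h (HPL h Hh)) as Mh.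
      pose proof (PL_mono hi (HPL hi Hhi)) as Mhi.
      pose proof (PL_maps h (HPL h Hh)) as Ph.
      pose proof (PL_maps hi (HPL hi Hhi)) as Phi.
      assert (0 <= hi s <= 1) by (apply Phi; lra).
      set (w := (hi s + s) / 2).
      assert (Hw : s < h w).
      { rewrite <- (E1 s) at 1. apply Mh; unfold w; lra. }
      destruct (Hinf (h w) Hw) as [g [Hg Hgt]].
      pose proof (PL_maps g (HPL g Hg) t ltac:(lra)).
      assert (0 <= h w <= 1) by (apply Ph; unfold w; lra).
      assert (hi (g t) < w).
      { rewrite <- (E2 w). apply Mhi; lra. }
      assert (s <= hi (g t)) by (apply (Hsle (fun x => hi (g x))); auto).
      unfold w in *; lra. }
    destruct (Hfix s) as [g0 [Hg0 Hne]]. { lra. }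
    destruct (Hinv g0 Hg0) as [gi0 [Hgi0 [F1 F2]]].
    pose proof (Key g0 gi0 Hg0 Hgi0 (conj F1 F2)) as K1.
    pose proof (Key gi0 g0 Hgi0 Hg0 (conj F2 F1)) as K2.
    pose proof (PL_maps g0 (HPL g0 Hg0) s ltac:(lra)).
    assert (gi0 s < gi0 (g0 s)) by (apply (PL_mono gi0 (HPL gi0 Hgi0)); lra).
    rewrite F2 in H0. lra.
Qed.

Theorem lemma4p5 (G : (R -> R) -> Prop) (sA sB : list (R -> R)) :
  PLT G ->
  (forall a, In a sA -> derived G a) ->
  (forall b, In b sB -> derived G b) ->
  exists g gi, G g /\ is_inv g gi /\
    forall a b, gen sA a -> gen sB b ->
      forall x, g (a (gi (b x))) = b (g (a (gi x))).
Proof.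
  intros HP HA HB. pose proof (proj1 HP) as HG.
  destruct (fix_list sA) as [eA [HeA FA]].
  { intros a Ha. apply (derived_fix G); auto. }
  destruct (fix_list sB) as [eB [HeB FB]].
  { intros a Ha. apply (derived_fix G); auto. }
  destruct (orbit G (1 - eA) eB HP ltac:(lra) ltac:(lra)) as [g [Hg Hgt]].
  destruct (proj2 (proj2 (proj2 HG)) g Hg) as [gi [Hgi [E1 E2]]].
  exists g, gi. split; auto. split; [split; auto|].
  intros a b Ha Hb.
  destruct (gen_fix sA eA a) as [Fa Ia]; auto.
  { intros y Hy. split; auto. apply (derived_inj G); auto. }
  destruct (gen_fix sB eB b) as [Fb Ib]; auto.
  { intros y Hy. split; auto. apply (derived_inj G); auto. }
  pose proof (PL_mono g (proj1 HG g Hg)) as Mg.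
  assert (Hg0 : g 0 = 0) by apply (proj1 HG g Hg).
  assert (Hc : forall x, g (a (gi x)) <> x -> x < eB /\ g (a (gi x)) < eB).
  { intros x Hx.
    destruct (Rle_lt_dec (gi x) eA) as [H1|H1].
    { exfalso. apply Hx. rewrite Fa by auto. apply E1. }
    destruct (Rle_lt_dec (1 - eA) (gi x)) as [H2|H2].
    { exfalso. apply Hx. rewrite Fa by auto. apply E1. }
    pose proof (preserve a eA (gi x) Fa Ia ltac:(lra)).
    split.
    - rewrite <- (E1 x). assert (g (gi x) < g (1 - eA)) by (apply Mg; lra). lra.
    - assert (g (a (gi x)) < g (1 - eA)) by (apply Mg; lra). lra. }
  intros x.
  destruct (Req_dec (b x) x) as [Hbx|Hbx].
  - rewrite Hbx. destruct (Req_dec (g (a (gi x))) x) as [Hcx|Hcx].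
    + rewrite Hcx. auto.
    + symmetry. apply Fb. left. destruct (Hc x Hcx). lra.
  - assert (Hx : eB < x < 1 - eB).
    { destruct (Rle_lt_dec x eB). { exfalso. apply Hbx, Fb. lra. }
      destruct (Rle_lt_dec (1 - eB) x). { exfalso. apply Hbx, Fb. lra. }
      lra. }
    pose proof (preserve b eB x Fb Ib Hx).
    destruct (Req_dec (g (a (gi (b x)))) (b x)) as [H1|H1].
    2: { destruct (Hc _ H1). lra. }
    destruct (Req_dec (g (a (gi x))) x) as [H2|H2].
    2: { destruct (Hc _ H2). lra. }
    rewrite H1, H2. reflexivity.
Qed.
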